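(* Let $Y$ be a normal solid vector space and $(X,d)$ a cone metric space over $Y$. Then for a sequence $(x_n)$ in $X$ and $x\in X$: $x_n\to x$ in $X$ if and only if $d(x_n,x)\to0$ in $Y$.
   Context: Vector space with convergence: a real vector space $Y$ with a relation $\to$ between sequences in $Y$ and points of $Y$ (uniqueness of limits not assumed) such that (C1) $x_n\to x$, $y_n\to y$ imply $x_n+y_n\to x+y$; (C2) $x_n\to x$, $\lambda\in\mathbb R$ imply $\lambda x_n\to\lambda x$; (C3) $\lambda_n\to\lambda$ in $\mathbb R$ imply $\lambda_n x\to\lambda x$. $A\subseteq Y$ is open if $x_n\to x\in A$ implies $x_n\in A$ for all but finitely many $n$; closed if $x_n\to x$, $x_n\in A$ $\forall n$ imply $x\in A$; $A^\circ$ is the union of all open subsets of $A$. A cone is a nonempty closed $K$ with $\lambda K\subseteq K$ ($\lambda\ge0$), $K+K\subseteq K$, $K\cap(-K)=\{0\}$; solid if $K\ne\{0\}$, $K^\circ\ne\emptyset$. A vector ordering is a partial order $\preceq$ with (V1) $x\preceq y\Rightarrow x+z\preceq y+z$; (V2) $\lambda\ge0$, $x\preceq y\Rightarrow\lambda x\preceq\lambda y$; (V3) $x_n\to x$, $y_n\to y$, $x_n\preceq y_n$ $\forall n\Rightarrow x\preceq y$. Solid vector space: positive cone $K=\{x:x\succeq0\}$ solid, with $x\prec y$ iff $y-x\in K^\circ$. Normal: whenever $x_n\preceq y_n\preceq z_n$ for all $n$, $x_n\to x$, $z_n\to x$, then $y_n\to x$. Cone metric space over $Y$: nonempty $X$ with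 $d\colon X\times X\to Y$, $d(x,y)\succeq0$, $d(x,y)=0$ iff $x=y$, $d(x,y)=d(y,x)$, $d(x,y)\preceq d(x,z)+d(z,y)$. Convergence in $X$: $x_n\to x$ iff for every $c\succ0$, $d(x_n,x)\prec c$ for all but finitely many $n$. *)

(* Defs.v *)
From HB Require Import structures.
From mathcomp Require Import all_boot all_order all_algebra.
From mathcomp Require Import reals.
Set Implicit Arguments. Unset Strict Implicit. Unset Printing Implicit Defensive.
Import Order.TTheory GRing.Theory Num.Theory.
Local Open Scope ring_scope.

Section VSC.
Variables (R : realType) (Y : lmodType R).

Definition real_cvg (lam : nat -> R) (l : R) : Prop :=
  forall e : R, 0 < e -> exists N : nat, forall n : nat, (N <= n)%N -> `|lam n - l| < e.

(* vector space with convergence: axioms (C1)-(C3); uniqueness of limits not assumed *)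
Definition is_vs_convergence (conv : (nat -> Y) -> Y -> Prop) : Prop :=
  [/\ (forall xs ys x y, conv xs x -> conv ys y -> conv (fun n => xs n + ys n) (x + y)),
      (forall xs x (l : R), conv xs x -> conv (fun n => l *: xs n) (l *: x))
    & (forall (lam : nat -> R) (l : R) (x : Y), real_cvg lam l ->
         conv (fun n => lam n *: x) (l *: x))].

Variable conv : (nat -> Y) -> Y -> Prop.

Definition c_open (A : Y -> Prop) : Prop :=
  forall xs x, conv xs x -> A x -> exists N : nat, forall n, (N <= n)%N -> A (xs n).

Definition c_closed (A : Y -> Prop) : Prop :=
  forall xs x, conv xs x -> (forall n, A (xs n)) -> A x.

Definition c_interior (A : Y -> Prop) : Y -> Prop :=
  fun x => exists U : Y -> Prop, [/\ c_open U, (forall y, U y -> A y) & U x].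

Definition is_cone (K : Y -> Prop) : Prop :=
  [/\ (exists x, K x), c_closed K,
      (forall (l : R) x, 0 <= l -> K x -> K (l *: x)),
      (forall x y, K x -> K y -> K (x + y))
    & (forall x, K x -> K (- x) -> x = 0)].

Definition is_solid_cone (K : Y -> Prop) : Prop :=
  [/\ is_cone K, (exists x, K x /\ x <> 0) & (exists x, c_interior K x)].

Definition is_vector_ordering (le : Y -> Y -> Prop) : Prop :=
  [/\ (forall x, le x x),
      (forall x y, le x y -> le y x -> x = y),
      (forall x y z, le x y -> le y z -> le x z) /\
      (forall x y z, le x y -> le (x + z) (y + z)),
      (forall (l : R) x y, 0 <= l -> le x y -> le (l *: x) (l *: y))
    & (forall xs ys x y, conv xs x -> conv ys y -> (forall n, le (xs n) (ys n)) -> le x y)].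

Definition pos_cone (le : Y -> Y -> Prop) : Y -> Prop := fun x => le 0 x.

Definition is_solid_vector_space (le : Y -> Y -> Prop) : Prop :=
  is_vs_convergence conv /\ is_vector_ordering le /\ is_solid_cone (pos_cone le).

Definition slt (le : Y -> Y -> Prop) (x y : Y) : Prop :=
  c_interior (pos_cone le) (y - x).

Definition is_normal (le : Y -> Y -> Prop) : Prop :=
  forall xs ys zs x, (forall n, le (xs n) (ys n) /\ le (ys n) (zs n)) ->
    conv xs x -> conv zs x -> conv ys x.

Definition is_cone_metric (X : Type) (le : Y -> Y -> Prop) (d : X -> X -> Y) : Prop :=
  [/\ (forall x y, le 0 (d x y)),
      (forall x y, d x y = 0 <-> x = y),
      (forall x y, d x y = d y x)
    & (forall x y z, le (d x y) (d x z + d z y))].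

Definition cm_conv (X : Type) (le : Y -> Y -> Prop) (d : X -> X -> Y)
  (xs : nat -> X) (x : X) : Prop :=
  forall c, slt le 0 c -> exists N : nat, forall n, (N <= n)%N -> slt le (d (xs n) x) c.

End VSC.

(* Main.v *)
Require Import Defs.
From mathcomp Require Import all_boot all_order all_algebra reals.
From Stdlib Require Import FunctionalExtensionality Classical ClassicalEpsilon.
Import Order.TTheory GRing.Theory Num.Theory.
Local Open Scope ring_scope.

Lemma choice_any (B A : Type) (P : B -> A -> Prop) :
  (forall k, exists a, P k a) -> exists f, forall k, P k (f k).
Proof.
move=> H; exists (fun k => proj1_sig (constructive_indefinite_description _ (H k))).
move=> k; exact: proj2_sig (constructive_indefinite_description _ (H k)).
Qed.

Lemma inv_cvg0 (R : realType) : real_cvg (fun n : nat => (n.+1%:R : R)^-1) 0.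
Proof.
move=> e e0; exists (Num.bound e^-1) => n hn.
rewrite subr0 ger0_norm ?invr_ge0 ?ler0n //.
rewrite -[X in _ < X](invrK e) ltf_pV2 ?posrE ?ltr0Sn ?invr_gt0 //.
apply: lt_le_trans (archi_boundP _) _; first by rewrite invr_ge0 ltW.
by rewrite ler_nat; apply: leq_trans hn _.
Qed.

Section Aux.
Variables (R : realType) (Y : lmodType R) (conv : (nat -> Y) -> Y -> Prop)
  (le : Y -> Y -> Prop).
Hypothesis hY : is_solid_vector_space conv le.

Lemma conv_const c : conv (fun _ => c) c.
Proof.
case: hY => [[C1 C2 C3] _].
have := C3 (fun _ => 1) 1 c.
have -> : (fun _ : nat => 1 *: c) = (fun _ => c).
  by apply: functional_extensionality => n; rewrite scale1r.
rewrite scale1r; apply=> e e0; exists 0%N => n _; by rewrite subrr normr0.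
Qed.

Lemma le_sub a b : le 0 (a - b) -> le b a.
Proof.
case: hY => [_ [[_ _ [_ V1] _ _] _]] h.
by have := V1 _ _ b h; rewrite add0r subrK.
Qed.

Lemma int_le y : c_interior conv (pos_cone le) y -> le 0 y.
Proof. by case=> U [_ UK Uy]; apply: UK. Qed.

Lemma int_scale l y : 0 < l -> c_interior conv (pos_cone le) y ->
  c_interior conv (pos_cone le) (l *: y).
Proof.
case: hY => [[C1 C2 C3] [[_ _ _ V2 _] _]] l0 [U [Uo UK Uy]].
exists (fun z => U (l^-1 *: z)); split.
- move=> zs z hz Uz; have := C2 _ _ l^-1 hz.
  by move=> /Uo /(_ Uz).
- move=> z Uz; have := V2 l _ _ (ltW l0) (UK _ Uz).
  by rewrite /pos_cone scaler0 scalerA divff ?gt_eqF // scale1r.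
- by rewrite scalerA mulVf ?gt_eqF // scale1r.
Qed.

Lemma int_bound c : c_interior conv (pos_cone le) c ->
  forall y, exists t, 0 <= t /\ le y (t *: c).
Proof.
case: hY => [[C1 C2 C3] [[_ _ _ V2 _] _]] [U [Uo UK Uc]] y.
have hs : conv (fun n => c + (-1) *: ((n.+1%:R : R)^-1 *: y)) (c + (-1) *: (0 *: y)).
  apply: C1; first exact: conv_const.
  by apply: C2; apply: C3; apply: inv_cvg0.
rewrite scale0r scaler0 addr0 in hs.
have [N HN] := Uo _ _ hs Uc.
have := UK _ (HN N (leqnn N)); rewrite /pos_cone => h0.
have := V2 (N.+1%:R) _ _ (ler0n _ _) h0.
rewrite scaler0 scalerDr scaleN1r scalerN scalerA divff ?pnatr_eq0 // scale1r.
move=> h1; exists N.+1%:R; split; first exact: ler0n.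
exact: le_sub.
Qed.

End Aux.

Theorem theorem9p18 (R : realType) (Y : lmodType R)
  (conv : (nat -> Y) -> Y -> Prop) (le : Y -> Y -> Prop)
  (hY : is_solid_vector_space conv le) (hN : is_normal conv le)
  (X : Type) (d : X -> X -> Y) (hd : is_cone_metric le d)
  (xs : nat -> X) (x : X) :
  cm_conv conv le d xs x <-> conv (fun n => d (xs n) x) 0.
Proof.
have [[C1 C2 C3] [_ [_ _ [c hc]]]] := hY.
case: hd => [d0 _ _ _].
split.
- move=> hcm.
  pose ck (k : nat) := ((k.+1%:R : R)^-1 *: c).
  have hk : forall k, exists N, forall n, (N <= n)%N -> slt conv le (d (xs n) x) (ck k).
    move=> k; apply: hcm; rewrite /slt subr0.
    by rewrite /ck; apply: (@int_scale _ _ conv le hY) => //; rewrite invr_gt0 ltr0Sn.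
  have [N0 HN0] := choice_any _ _ _ hk.
  pose N k := (N0 k + k)%N.
  have hl : forall n, exists t : R, [/\ 0 <= t, le (d (xs n) x) (t *: c) &
      forall k, (N k <= n)%N -> t <= (k.+1%:R)^-1].
    move=> n; case: (classic (exists k, (N k <= n)%N)) => [exP|nex].
    + have ubP : forall k, (N k <= n)%N -> (k <= n)%N.
        by move=> k; rewrite /N => h; apply: leq_trans h; apply: leq_addl.
      case: (ex_maxnP exP ubP) => m Pm maxm.
      exists (m.+1%:R)^-1; split.
      * by rewrite invr_ge0 ler0n.
      * apply: (@le_sub _ _ conv le hY); apply: (@int_le _ _ conv le).
        apply: (HN0 m n); apply: leq_trans Pm; apply: leq_addr.
      * move=> k /maxm km; rewrite lef_pV2 ?posrE ?ltr0Sn // ler_nat; exact km.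
    + have [t [t0 ht]] := @int_bound _ _ conv le hY _ hc (d (xs n) x).
      exists t; split => // k hk'; exfalso; apply: nex; by exists k.
  have [lam Hlam] := choice_any _ _ _ hl.
  have lcvg : real_cvg lam 0.
    move=> e e0; have [M HM] := (@inv_cvg0 R) e e0.
    exists (N M) => n hn; have [l0 _ lb] := Hlam n.
    rewrite subr0 ger0_norm //; apply: le_lt_trans (lb M hn) _.
    have := HM M (leqnn M); rewrite subr0 ger0_norm //.
    by rewrite invr_ge0 ler0n.
  have hz := C3 lam 0 c lcvg; rewrite scale0r in hz.
  apply: (hN (fun _ => 0) _ (fun n => lam n *: c)) => //; last exact: (@conv_const _ _ conv le hY).
  by move=> n; have [_ h _] := Hlam n; split.
- move=> hcv c' [U [Uo UK Uc]]; rewrite subr0 in Uc.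
  have hs : conv (fun n => c' + (-1) *: d (xs n) x) (c' + (-1) *: 0).
    by apply: C1; [exact: (@conv_const _ _ conv le hY) | apply: C2].
  rewrite scaler0 addr0 in hs.
  have [M HM] := Uo _ _ hs Uc.
  exists M => n hn; exists U; split => //.
  by have := HM n hn; rewrite scaleN1r.
Qed.
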